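(* Let $t\ge 3$ and let $\mathcal{H}$ be an $n$-vertex $3$-uniform hypergraph that does not contain $K_{2,t}$ as a trace. Let $A$ be the set of edges of $\mathcal{H}$ containing at least one pair of vertices whose co-degree in $\mathcal{H}$ is $1$, and let $B=\mathcal{H}\setminus A$. For a vertex $x$, let $N_1(x)=\{z: \exists e\in B,\ \{x,z\}\subseteq e\}$. Then for any two distinct vertices $x,y\in V(\mathcal{H})$, $|N_1(x)\cap N_1(y)|\le (t-1)(6t-2)$.
   Context: A hypergraph $\mathcal{H}$ contains a graph $F$ (vertices $v_1,\dots,v_p$, edges $e_1,\dots,e_q$) as a trace if there exist distinct vertices $w_1,\dots,w_p\in V(\mathcal{H})$ and distinct edges $f_1,\dots,f_q\in E(\mathcal{H})$ such that whenever $e_i=v_\alpha v_\beta$, $f_i\cap\{w_1,\dots,w_p\}=\{w_\alpha,w_\beta\}$. The co-degree of a pair $\{x,y\}$ in $\mathcal{H}$ is the number of edges of $\mathcal{H}$ containing $\{x,y\}$. $\mathcal{H}\setminus A$ denotes the hypergraph on $V(\mathcal{H})$ with edge set $E(\mathcal{H})\setminus A$. *)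

(* Defs.v *)
From mathcomp Require Import all_boot.
Set Implicit Arguments. Unset Strict Implicit. Unset Printing Implicit Defensive.

Definition uniform (V : finType) (k : nat) (H : {set {set V}}) : Prop :=
  forall e, e \in H -> #|e| = k.

Definition contains_trace (V U : finType) (H : {set {set V}})
    (EF : {set {set U}}) : Prop :=
  exists (w : U -> V) (f : {set U} -> {set V}),
    injective w /\
    {in EF &, injective f} /\
    (forall e, e \in EF -> f e \in H) /\
    (forall e, e \in EF -> f e :&: (w @: [set: U]) = w @: e).

Definition Kst_edges (s t : nat) : {set {set ('I_s + 'I_t)%type}} :=
  [set [set inl i; inr j] | i : 'I_s, j : 'I_t].

Definition codeg (V : finType) (H : {set {set V}}) (x y : V) : nat :=
  #|[set e in H | (x \in e) && (y \in e)]|.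

Definition edgesA (V : finType) (H : {set {set V}}) : {set {set V}} :=
  [set e in H | [exists x : V, exists y : V,
     [&& x != y, x \in e, y \in e & codeg H x y == 1]]].

Definition edgesB (V : finType) (H : {set {set V}}) : {set {set V}} :=
  H :\: edgesA H.

Definition N1 (V : finType) (H : {set {set V}}) (x : V) : {set V} :=
  [set z | (z != x) && [exists e in edgesB H, (x \in e) && (z \in e)]].

(* Main.v *)
Require Import Defs.
From mathcomp Require Import all_boot zify.
Set Implicit Arguments. Unset Strict Implicit. Unset Printing Implicit Defensive.

Lemma other_edge (V : finType) (H : {set {set V}}) (x y z : V) :
  uniform 3 H -> x != y -> z != x -> z != y -> z \in N1 H x ->
  exists e, [/\ e \in H, x \in e, z \in e & y \notin e].
Proof.
move=> h3 xy zx zy; rewrite inE => /andP[_ /existsP[e /andP[eB /andP[xe ze]]]].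
move: eB; rewrite !inE => /andP[eA eH].
have cd : codeg H x z != 1.
  apply: contra eA => c1; rewrite eH /=; apply/existsP; exists x; apply/existsP; exists z.
  by rewrite eq_sym zx xe ze c1.
have c2 : 1 < codeg H x z.
  have : 0 < codeg H x z by rewrite /codeg card_gt0; apply/set0Pn; exists e; rewrite inE eH xe ze.
  by move: cd; case: (codeg H x z) => [|[|]].
have T3 : #|[set x; y; z]| = 3.
  have -> : [set x; y; z] = x |: [set y; z] by apply/setP=> v; rewrite !inE orbA.
  rewrite cardsU1 cards2 !inE (negbTE xy) eq_sym (negbTE zx) /=.
  by rewrite eq_sym (negbTE zy).
have only : forall f, f \in H -> x \in f -> z \in f -> y \in f -> f = [set x; y; z].
  move=> f fH xf zf yf; apply/eqP; rewrite eq_sym eqEcard h3 // T3 leqnn andbT.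
  by apply/subsetP => v; rewrite !inE => /orP[/orP[]|]/eqP->.
move: c2; rewrite /codeg => c2.
have [e1 e1C] : exists e1, e1 \in [set e in H | (x \in e) && (z \in e)].
  by apply/set0Pn; rewrite -card_gt0; apply: ltnW.
have [e2 e2C] : exists e2, e2 \in [set e in H | (x \in e) && (z \in e)] :\ e1.
  apply/set0Pn; rewrite -card_gt0.
  by move: c2; rewrite (cardsD1 e1) e1C.
move: e1C e2C; rewrite !inE => /andP[e1H /andP[xe1 ze1]] /andP[e21 /andP[e2H /andP[xe2 ze2]]].
case y1: (y \in e1); last by exists e1; rewrite e1H xe1 ze1 y1.
case y2: (y \in e2); last by exists e2; rewrite e2H xe2 ze2 y2.
by move: e21; rewrite (only _ e1H) // (only _ e2H) // eqxx.
Qed.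

Lemma card_sum (T : finType) (S : {set T}) (P : pred T) :
  #|[set w in S | P w]| = \sum_(w in S) (P w : nat).
Proof.
rewrite -sum1_card big_mkcond /= [RHS]big_mkcond /=.
apply: eq_bigr => w _; rewrite inE; by case: (w \in S); case: (P w).
Qed.

Lemma low_indeg (T : finType) (d : T -> {set T}) (hd : forall v, #|d v| <= 2)
  (S : {set T}) : 0 < #|S| -> exists2 z, z \in S & #|[set w in S | z \in d w]| <= 2.
Proof.
move=> S0.
case: (pickP [pred z in S | #|[set w in S | z \in d w]| <= 2]) => [z /andP[]|H0].
  by exists z.
have : 3 * #|S| <= 2 * #|S|.
  apply: (@leq_trans (\sum_(z in S) #|[set w in S | z \in d w]|)).
    rewrite -sum1_card big_distrr /= leq_sum // => z zS.
    by move: (H0 z) => /=; rewrite zS /= => /negbT; rewrite -ltnNge muln1.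
  rewrite (eq_bigr (fun z => \sum_(w in S) ((z \in d w) : nat))); last by move=> z _; rewrite card_sum.
  rewrite exchange_big /= -sum1_card big_distrr /= leq_sum // => w _.
  rewrite muln1 -card_sum; apply: leq_trans (hd w); apply: subset_leq_card.
  by apply/subsetP => z; rewrite inE => /andP[].
by rewrite leq_pmul2r.
Qed.
Lemma indep (T : finType) (d : T -> {set T}) (hd : forall v, #|d v| <= 2) :
  forall S : {set T}, exists I : {set T}, [/\ I \subset S, #|S| <= 5 * #|I| &
    forall u v, u \in I -> v \in I -> v \in d u -> u = v].
Proof.
move=> S; move: {2}#|S| (leqnn #|S|) => n; elim: n S => [|n IH] S hS.
  exists set0; split; rewrite ?sub0set //; last by move=> u v; rewrite inE.
  by move: hS; rewrite leqn0 => /eqP->.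
case: (posnP #|S|) => [S0|S0].
  exists set0; split; rewrite ?sub0set ?S0 //; by move=> u v; rewrite inE.
have [z zS hz] := low_indeg hd S0.
set R := z |: d z :|: [set w in S | z \in d w].
have hR : #|R| <= 5.
  rewrite /R; have h1 := cardsUI (z |: d z) [set w in S | z \in d w].
  have h2 := cardsU1 z (d z); have h3 := hd z; have h5 := leq_b1 (z \notin d z); lia.
have zR : z \in R by rewrite /R !inE eqxx.
have hSI : 0 < #|S :&: R| by rewrite card_gt0; apply/set0Pn; exists z; rewrite inE zR zS.
have hSI2 : #|S :&: R| <= 5 by apply: leq_trans (subset_leq_card (subsetIr _ _)) hR.
have e := cardsID R S.
have hSR : #|S :\: R| <= n by lia.
have [I [IS hI ind]] := IH (S :\: R) hSR.
exists (z |: I); split.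
- by rewrite subUset sub1set zS (subset_trans IS) // subsetDl.
- rewrite cardsU1 (_ : z \notin I) /=; last first.
    by apply/negP => /(subsetP IS); rewrite inE zR.
  lia.
- move=> u v; rewrite !inE => /orP[/eqP->|uI] /orP[/eqP->|vI] //.
  + move=> vd; have := subsetP IS v vI; rewrite /R !inE vd.
    move=> /andP[/negP H uS]; exfalso; apply: H; by rewrite ?uS ?orbT ?andbT.
  + move=> zd; have := subsetP IS u uI; rewrite /R !inE zd.
    move=> /andP[/negP H uS]; exfalso; apply: H; by rewrite ?uS ?orbT ?andbT.
  + exact: ind.
Qed.

Lemma inter_lemma (U V : finType) (w : U -> V) (g : {set V}) (e : {set U}) :
  (forall u, (w u \in g) = (u \in e)) -> g :&: (w @: [set: U]) = w @: e.
Proof.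
move=> h; apply/setP => v; rewrite inE; apply/andP/imsetP.
  by case=> vg /imsetP[u _ vu]; exists u => //; rewrite -h -vu.
by case=> u ue ->; rewrite h ue; split => //; apply: imset_f.
Qed.

Theorem mainTheorem5 (V : finType) (t : nat) (H : {set {set V}}) :
  3 <= t ->
  uniform 3 H ->
  ~ contains_trace H (Kst_edges 2 t) ->
  forall x y : V, x != y ->
    #|N1 H x :&: N1 H y| <= (t - 1) * (6 * t - 2).
Proof.
move=> t3 h3 nT x y xy.
set Z := N1 H x :&: N1 H y.
rewrite leqNgt; apply/negP => hZ; apply: nT.
have Zx : forall z, z \in Z -> (z != x) && (z != y).
  by move=> z; rewrite !inE => /andP[/andP[-> _] /andP[-> _]].
pose ex z := odflt set0 [pick e in H | (x \in e) && (z \in e) && (y \notin e)].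
pose ey z := odflt set0 [pick e in H | (y \in e) && (z \in e) && (x \notin e)].
have exP : forall z, z \in Z -> [/\ ex z \in H, x \in ex z, z \in ex z & y \notin ex z].
  move=> z zZ; have /andP[zx zy] := Zx z zZ.
  have [e [eH xe ze ye]] : exists e, [/\ e \in H, x \in e, z \in e & y \notin e].
    by apply: other_edge => //; move: zZ; rewrite inE => /andP[].
  rewrite /ex; case: pickP => [f /and3P[fH /andP[xf zf] yf]|] /=.
    by split.
  by move/(_ e); rewrite /= eH xe ze ye.
have eyP : forall z, z \in Z -> [/\ ey z \in H, y \in ey z, z \in ey z & x \notin ey z].
  move=> z zZ; have /andP[zx zy] := Zx z zZ.
  have [e [eH xe ze ye]] : exists e, [/\ e \in H, y \in e, z \in e & x \notin e].
    apply: (other_edge h3 _ zy zx); first by rewrite eq_sym.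
    by move: zZ; rewrite inE => /andP[].
  rewrite /ey; case: pickP => [f /and3P[fH /andP[xf zf] yf]|] /=.
    by split.
  by move/(_ e); rewrite /= eH xe ze ye.
pose d z := if z \in Z then (ex z :|: ey z) :\: [set x; y; z] else set0.
have hd : forall z, #|d z| <= 2.
  move=> z; rewrite /d; case: ifP => zZ; last by rewrite cards0.
  have [exH xex zex _] := exP z zZ; have [eyH yey zey _] := eyP z zZ.
  rewrite setDUl; apply: leq_trans (leq_card_setU _ _) _.
  have /andP[zx zy] := Zx z zZ.
  have key : forall (g : {set V}) a, g \in H -> a \in g -> z \in g -> a != z ->
      (a == x) || (a == y) -> #|g :\: [set x; y; z]| <= 1.
    move=> g a gH ag zg az axy; rewrite cardsD h3 //.
    have : #|[set a; z]| <= #|g :&: [set x; y; z]|.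
      apply: subset_leq_card; apply/subsetP => v; rewrite !inE.
      case/orP=> /eqP->; rewrite ?ag ?zg ?eqxx ?orbT //=.
      by case/orP: axy => ->; rewrite ?orbT.
    by rewrite cards2 az leq_subLR addn1.
  rewrite -[2]/(1 + 1) leq_add //.
    by apply: (key _ x) => //; rewrite ?eqxx // eq_sym.
  by apply: (key _ y) => //; rewrite ?eqxx ?orbT // eq_sym.
have [I [IZ hI ind]] := indep hd Z.
have It : t <= #|I|.
  have h1 : (t-1)*5 <= (t-1)*(6*t-2) by rewrite leq_mul2l; apply/orP; right; lia.
  lia.
set s := enum I.
pose zz (j : 'I_t) := nth x s j.
have js : forall j : 'I_t, j < size s by move=> j; rewrite -cardE; apply: leq_trans It.
have zzI : forall j, zz j \in I by move=> j; rewrite -mem_enum; apply: mem_nth.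
have zzZ : forall j, zz j \in Z by move=> j; apply: (subsetP IZ).
have zzinj : injective zz.
  by move=> j k /eqP; rewrite nth_uniq ?enum_uniq // => /eqP/val_inj.
have notin : forall j j', j' != j -> (zz j' \in ex (zz j)) = false /\ (zz j' \in ey (zz j)) = false.
  move=> j j' jj.
  have nd : zz j' \notin d (zz j).
    apply/negP => /(ind _ _ (zzI j) (zzI j'))/zzinj/eqP; by rewrite eq_sym (negbTE jj).
  have /andP[h1 h2] := Zx _ (zzZ j').
  have h3' : zz j' != zz j by apply: contra jj => /eqP/zzinj ->.
  move: nd; rewrite /d zzZ !inE (negbTE h1) (negbTE h2) (negbTE h3') /=.
  by case/norP => /negbTE -> /negbTE ->.
pose w := fun u : ('I_2 + 'I_t)%type =>
  match u with inl i => if val i == 0 then x else y | inr j => zz j end.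
pose f := fun e : {set ('I_2 + 'I_t)%type} =>
  if [pick j | inr j \in e] is Some j then
    (if (@inl 'I_2 'I_t ord0) \in e then ex (zz j) else ey (zz j)) else set0.
have key2 : forall e, e \in Kst_edges 2 t -> f e \in H /\ forall u, (w u \in f e) = (u \in e).
  move=> e /imset2P[i j _ _ ->].
  have pj : [pick j' | inr j' \in [set (@inl 'I_2 'I_t i); inr j]] = Some j.
    case: pickP => [j' | ].
      by rewrite !inE => /orP[] // /eqP[->].
    by move/(_ j); rewrite !inE eqxx orbT.
  rewrite /f pj; clear pj.
  have /andP[zjx zjy] := Zx _ (zzZ j).
  case: i => [[|[|//]]] Hi /=.
    have [exH xex zex yex] := exP _ (zzZ j).
    rewrite !inE /= exH; split => // u; case: u => [i'|j'] /=; rewrite !inE /=.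
      by case: i' => [[|[|//]]] Hi' /=; rewrite ?xex ?(negbTE yex).
    have -> : (inr j' == inr j :> ('I_2 + 'I_t)%type) = (j' == j) by [].
    case: (eqVneq j' j) => [->|jj]; first by rewrite zex.
    by have [-> _] := notin _ _ jj.
  have [eyH yey zey xey] := eyP _ (zzZ j).
  rewrite !inE /= eyH; split => // u; case: u => [i'|j'] /=; rewrite !inE /=.
    by case: i' => [[|[|//]]] Hi' /=; rewrite ?yey ?(negbTE xey).
  have -> : (inr j' == inr j :> ('I_2 + 'I_t)%type) = (j' == j) by [].
  case: (eqVneq j' j) => [->|jj]; first by rewrite zey.
  by have [_ ->] := notin _ _ jj.
have winj : injective w.
  move=> [[[|[|//]]] Hi|j] [[[|[|//]]] Hi'|j'] /=; rewrite /w /=;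
  try (by move=> _; congr inl; apply: val_inj);
  try (by move=> /eqP; rewrite (negbTE xy));
  try (by move=> /eqP; rewrite eq_sym (negbTE xy));
  try (by move=> h; have := Zx _ (zzZ j); rewrite h eqxx ?andbF);
  try (by move=> h; have := Zx _ (zzZ j'); rewrite -h eqxx ?andbF).
  by move/zzinj->.
exists w, f; split; [exact: winj | split; [|split]].
- move=> e1 e2 h1 h2 fe; apply: (imset_inj winj).
  have [_ k1] := key2 _ h1; have [_ k2] := key2 _ h2.
  by rewrite -(inter_lemma k1) -(inter_lemma k2) fe.
- by move=> e /key2[].
- by move=> e /key2[_ k]; apply: inter_lemma.
Qed.
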